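(* For all positive integers $d\le n$ there exists $\mathcal{A}\subset2^{[n]}$ with $\mathrm{VC}(\mathcal{A}\cap\mathcal{A})\le d$, $\mathrm{VC}(\mathcal{A}\cup\mathcal{A})\le d$ and $|\mathcal{A}|>(n/d)^d$.
   Context: $[n]=\{1,\dots,n\}$. $\mathrm{VC}(\mathcal{F})$ is the largest cardinality of a $Y\subset[n]$ with $\{S\cap Y:S\in\mathcal{F}\}=2^Y$. $\mathcal{A}\cap\mathcal{A}=\{S\cap T:S,T\in\mathcal{A}\}$ and $\mathcal{A}\cup\mathcal{A}=\{S\cup T:S,T\in\mathcal{A}\}$. *)

(* Defs.v *)
From mathcomp Require Import all_boot all_order all_algebra.
Set Implicit Arguments. Unset Strict Implicit. Unset Printing Implicit Defensive.

(* Ground set [n] is modelled as 'I_n (elements 0..n-1). *)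

Definition shatters (T : finType) (F : {set {set T}}) (Y : {set T}) : bool :=
  [set S :&: Y | S in F] == powerset Y.

Definition VC (T : finType) (F : {set {set T}}) : nat :=
  \max_(Y : {set T} | shatters F Y) #|Y|.

(* A ∩ A = {S ∩ T : S, T ∈ A},  A ∪ A = {S ∪ T : S, T ∈ A}. *)
Definition fam_cap (T : finType) (A : {set {set T}}) : {set {set T}} :=
  [set S :&: U | S in A, U in A].
Definition fam_cup (T : finType) (A : {set {set T}}) : {set {set T}} :=
  [set S :|: U | S in A, U in A].

(* Main.v *)
Require Import Defs.
From mathcomp Require Import all_boot all_order all_algebra.
Import GRing.Theory Num.Theory.

Section Aux.
Variables (n d : nat) (hd : (0 < d)%N).

Definition dc (S : {set 'I_n}) :=
  forall x y : 'I_n, x \in S -> (y <= x)%N -> y %% d = x %% d -> y \in S.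

Lemma vc_dc (F : {set {set 'I_n}}) : (forall S, S \in F -> dc S) -> (VC F <= d)%N.
Proof.
move=> HF; apply/bigmax_leqP => Y /eqP HY.
pose f (x : 'I_n) : 'I_d := Ordinal (ltn_pmod x hd).
have inj : {in Y &, injective f}.
  have key : forall x y, x \in Y -> y \in Y -> f x = f y -> (x <= y)%N -> x = y.
    move=> x y xY yY fxy lxy; apply/eqP/negPn/negP => nxy.
    have : [set y] \in powerset Y by rewrite powersetE sub1set.
    rewrite -HY => /imsetP [S SF eS].
    have yS : y \in S by have : y \in [set y] := set11 y; rewrite eS inE => /andP[].
    have xS : x \in S.
      apply: (HF S SF y x yS lxy); by have := congr1 val fxy.
    have : x \in [set y] by rewrite eS inE xS xY.
    by rewrite inE (negbTE nxy).
  move=> x y xY yY fxy; case: (leqP x y) => h.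
    exact: key.
  by apply/esym/(key y x yY xY (esym fxy)); apply: ltnW.
rewrite -(card_in_imset inj).
by have := max_card [set f x | x in Y]; rewrite card_ord.
Qed.

Lemma dc_cap S T : dc S -> dc T -> dc (S :&: T).
Proof.
move=> hS hT x y; rewrite !inE => /andP[xS xT] l e.
by rewrite (hS x y) ?(hT x y).
Qed.

Lemma dc_cup S T : dc S -> dc T -> dc (S :|: T).
Proof.
move=> hS hT x y; rewrite !inE => /orP[xS|xT] l e.
  by rewrite (hS x y).
by rewrite (hT x y) ?orbT.
Qed.

Variable q : nat.
Hypothesis hq : (q * d <= n)%N.

Definition mkS (f : {ffun 'I_d -> 'I_q.+1}) : {set 'I_n} :=
  [set x : 'I_n | (x %/ d < f (Ordinal (ltn_pmod x hd)))%N].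

Lemma dc_mkS f : dc (mkS f).
Proof.
move=> x y; rewrite !inE => hx l e.
have -> : Ordinal (ltn_pmod y hd) = Ordinal (ltn_pmod x hd) by apply: val_inj.
apply: leq_ltn_trans hx; exact: leq_div2r.
Qed.

Lemma mkS_sub f g : mkS f \subset mkS g -> forall i, (f i <= g i)%N.
Proof.
move=> sub i; rewrite leqNgt; apply/negP => lt.
have gq : (g i < q)%N by apply: leq_trans lt _; rewrite -ltnS.
have xn : (g i * d + i < n)%N.
  apply: leq_trans hq.
  apply: (@leq_trans ((g i).+1 * d)); first by rewrite mulSn addnC ltn_add2r.
  by rewrite leq_mul2r gq orbT.
pose x : 'I_n := Ordinal xn.
have xm : x %% d = i by rewrite /= modnMDl modn_small.
have xd : x %/ d = g i by rewrite /= divnMDl // divn_small // addn0.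
have eo : Ordinal (ltn_pmod x hd) = i by apply: val_inj.
have : x \in mkS f by rewrite inE eo xd.
by move/(subsetP sub); rewrite inE eo xd ltnn.
Qed.

Lemma mkS_inj : injective mkS.
Proof.
move=> f g e; apply/ffunP => i; apply: val_inj; apply/eqP.
rewrite eqn_leq !mkS_sub // e //.
Qed.
End Aux.

Theorem proposition11 (n d : nat) (hd : (0 < d)%N) (hdn : (d <= n)%N) :
  exists A : {set {set 'I_n}},
    [/\ (VC (fam_cap A) <= d)%N, (VC (fam_cup A) <= d)%N &
        ((n%:R / d%:R) ^+ d < (#|A|%:R : rat))%R].
Proof.
pose q := n %/ d.
have hq : (q * d <= n)%N by rewrite leq_trunc_div.
exists [set @mkS n d hd q f | f : {ffun 'I_d -> 'I_q.+1}]; split.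
- apply: (@vc_dc n d hd) => S /imset2P [S1 S2 /imsetP[f _ ->] /imsetP[g _ ->] ->].
  exact: (@dc_cap n d _ _) (dc_mkS _ _ hd _ f) (dc_mkS _ _ hd _ g).
- apply: (@vc_dc n d hd) => S /imset2P [S1 S2 /imsetP[f _ ->] /imsetP[g _ ->] ->].
  exact: (@dc_cup n d _ _) (dc_mkS _ _ hd _ f) (dc_mkS _ _ hd _ g).
- rewrite card_imset; last exact: (@mkS_inj n d hd q hq).
  rewrite card_ffun !card_ord natrX ltrXn2r ?divr_ge0 ?ler0n //; first by rewrite -lt0n.
  rewrite ltr_pdivrMr ?ltr0n // -natrM ltr_nat; exact: ltn_ceil.
Qed.
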